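(* Let $p\ne q$ be primes and $G=\mathbb{Z}_p^2\times\mathbb{Z}_q^2$. If $A\subseteq G$ and $B$ is a subgroup of $G$ such that $A\oplus B=G$ (i.e. $A+B=G$ and $|A||B|=|G|$), then $A$ is spectral.
   Context: For $w=(u,v)\in G$ ($u\in\mathbb{Z}_p^2$, $v\in\mathbb{Z}_q^2$) define $\chi_w(a,b)=\exp\big(2\pi i(\tfrac{u\cdot a}{p}+\tfrac{v\cdot b}{q})\big)$ and $\chi(A)=\sum_{s\in A}\chi(s)$. $A$ is spectral if there is $\Lambda\subseteq G$ with $|\Lambda|=|A|$ and $\chi_{\lambda-\lambda'}(A)=0$ for all distinct $\lambda,\lambda'\in\Lambda$. *)

(* Defs.v *)
From HB Require Import structures.
From mathcomp Require Import all_boot all_order all_algebra.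
From mathcomp Require Import reals trigo.
From mathcomp Require Import complex.
Set Implicit Arguments. Unset Strict Implicit. Unset Printing Implicit Defensive.
Import Order.TTheory GRing.Theory Num.Theory.
Local Open Scope ring_scope.

Definition Gpq (p q : nat) : finType := (('Z_p * 'Z_p) * ('Z_q * 'Z_q))%type.

Definition dotZ (n : nat) (u a : 'Z_n * 'Z_n) : nat :=
  nat_of_ord (u.1 * a.1 + u.2 * a.2).

Definition expi (R : realType) (t : R) : R[i] :=
  Complex (cos (2 * pi * t)) (sin (2 * pi * t)).

Definition chi (R : realType) (p q : nat) (w s : Gpq p q) : R[i] :=
  expi ((dotZ w.1 s.1)%:R / p%:R + (dotZ w.2 s.2)%:R / q%:R).

Definition chiS (R : realType) (p q : nat) (w : Gpq p q) (A : {set Gpq p q}) : R[i] :=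
  \sum_(s in A) chi R w s.

Definition spectral (R : realType) (p q : nat) (A : {set Gpq p q}) : Prop :=
  exists Lambda : {set Gpq p q},
    #|Lambda| = #|A| /\
    forall l l', l \in Lambda -> l' \in Lambda -> l != l' ->
      chiS R (l - l') A = 0.

Definition is_subgroup (p q : nat) (B : {set Gpq p q}) : Prop :=
  0 \in B /\ forall x y, x \in B -> y \in B -> x - y \in B.

Definition direct_sum_eq_G (p q : nat) (A B : {set Gpq p q}) : Prop :=
  (forall g : Gpq p q, exists a b, [/\ a \in A, b \in B & g = a + b]) /\
  (#|A| * #|B| = #|[set: Gpq p q]|)%N.

(* Main.v *)
Require Import Defs.
From HB Require Import structures.
From mathcomp Require Import all_boot all_order all_algebra.
From mathcomp Require Import reals trigo.
From mathcomp Require Import complex.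
From mathcomp Require Import ring lra.
Import Order.TTheory GRing.Theory Num.Theory.
Local Open Scope ring_scope.

Lemma mulC_expl (R : realType) (a b c d : R) :
  (Complex a b : R[i]) * (Complex c d) = Complex (a*c - b*d) (a*d + b*c).
Proof. reflexivity. Qed.

Lemma expiD (R : realType) (x y : R) : expi (x + y) = expi x * expi y.
Proof.
rewrite /expi mulC_expl mulrDr cosD sinD; congr Complex; ring.
Qed.

Lemma expi0 (R : realType) : expi (0 : R) = 1.
Proof. by rewrite /expi mulr0 cos0 sin0. Qed.

Lemma expi1 (R : realType) : expi (1 : R) = 1.
Proof.
rewrite /expi mulr1 mulr_natl cos2pi sin2pi //.
Qed.

Lemma expi_nat (R : realType) n : expi (n%:R : R) = 1.
Proof.
elim: n => [|n IH]; first by rewrite expi0.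
by rewrite -addn1 natrD expiD IH expi1 mulr1.
Qed.

Lemma expi_mod (R : realType) (n m : nat) : (0 < n)%N ->
  expi ((m %% n)%:R / n%:R : R) = expi (m%:R / n%:R).
Proof.
move=> n0; rewrite [in RHS](divn_eq m n) natrD natrM mulrDl mulfK.
  by rewrite expiD expi_nat mul1r.
by rewrite pnatr_eq0 -lt0n.
Qed.

Lemma expi_neq1 (R : realType) (t : R) : 0 < t < 1 -> expi t != 1.
Proof.
move=> /andP[t0 t1]; apply/negP => /eqP H.
have Hc : cos (2 * pi * t) = 1 by have := congr1 (@complex.Re R) H.
have e : 2 * pi * t = (pi * t) *+ 2 by rewrite -mulr_natr; ring.
rewrite e cos_mulr2n in Hc.
have hc : cos (pi * t) ^+ 2 = 1.
  by move: Hc; rewrite mulr2n; lra.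
have : sin (pi * t) ^+ 2 = 0 by rewrite sin2cos2 hc subrr.
move/eqP; rewrite expf_eq0 /= => /eqP hs.
have : 0 < sin (pi * t).
  apply: sin_gt0_pi; apply/andP; split; first by rewrite mulr_gt0 // pi_gt0.
  by rewrite gtr_pMr // pi_gt0.
by rewrite hs ltxx.
Qed.

Definition eZ (R : realType) (n : nat) (x : 'Z_n) : R[i] :=
  expi ((x : nat)%:R / n%:R).
Arguments eZ R {n}.

Lemma eZD (R : realType) n (x y : 'Z_n) : (1 < n)%N ->
  eZ R (x + y) = eZ R x * eZ R y.
Proof.
move=> n1; rewrite /eZ -expiD -mulrDl -natrD.
have -> : ((x + y)%R : nat) = (((x : nat) + y) %% n)%N.
  exact: (f_equal (fun m => (((x : nat) + y) %% m)%N) (Zp_cast n1)).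
by rewrite expi_mod // ltnW.
Qed.

Lemma eZ0 (R : realType) n : eZ R (0 : 'Z_n) = 1.
Proof. by rewrite /eZ /= mul0r expi0. Qed.

Lemma eZ_neq1 (R : realType) n (x : 'Z_n) : (1 < n)%N -> x != 0 ->
  eZ R x != 1.
Proof.
move=> n1 x0; apply: expi_neq1.
have xn : ((x : nat) < n)%N by rewrite -[X in (_ < X)%N](Zp_cast n1).
have x0' : (0 < (x : nat))%N by rewrite lt0n; apply: contra x0 => /eqP h; apply/eqP/val_inj.
have n0 : (0 : R) < n%:R by rewrite ltr0n ltnW.
apply/andP; split; first by rewrite divr_gt0 // ltr0n.
by rewrite ltr_pdivrMr // mul1r ltr_nat.
Qed.

Lemma chiE (R : realType) p q (w s : Gpq p q) :
  chi R w s = eZ R (w.1.1 * s.1.1 + w.1.2 * s.1.2) *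
              eZ R (w.2.1 * s.2.1 + w.2.2 * s.2.2).
Proof. by rewrite /chi /dotZ expiD. Qed.

Lemma chiDr (R : realType) p q (w s t : Gpq p q) : (1 < p)%N -> (1 < q)%N ->
  chi R w (s + t) = chi R w s * chi R w t.
Proof.
move=> p1 q1; rewrite !chiE /=.
rewrite !mulrDr (addrACA (w.1.1 * s.1.1)) (addrACA (w.2.1 * s.2.1)).
by rewrite !eZD // mulrACA.
Qed.

Lemma chi_sym (R : realType) p q (w s : Gpq p q) : chi R w s = chi R s w.
Proof.
by rewrite !chiE (mulrC w.1.1) (mulrC w.1.2) (mulrC w.2.1) (mulrC w.2.2).
Qed.

Lemma chi0r (R : realType) p q (w : Gpq p q) : chi R w 0 = 1.
Proof. by rewrite chiE /= !mulr0 !addr0 !eZ0 mulr1. Qed.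

Lemma chi_nondeg (R : realType) p q (s : Gpq p q) : (1 < p)%N -> (1 < q)%N ->
  s != 0 -> exists w : Gpq p q, chi R w s != 1.
Proof.
move=> p1 q1; case: s => [[a b] [c d]] s0.
have E0p (x y : 'Z_p) : 0 * x + 0 * y = 0 by rewrite !mul0r addr0.
have E0q (x y : 'Z_q) : 0 * x + 0 * y = 0 by rewrite !mul0r addr0.
have E1p (x y : 'Z_p) : 1 * x + 0 * y = x by rewrite mul0r mul1r addr0.
have E1q (x y : 'Z_q) : 1 * x + 0 * y = x by rewrite mul0r mul1r addr0.
have E2p (x y : 'Z_p) : 0 * x + 1 * y = y by rewrite mul0r mul1r add0r.
have E2q (x y : 'Z_q) : 0 * x + 1 * y = y by rewrite mul0r mul1r add0r.
have [a0|a0] := eqVneq a 0; last first.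
  exists ((1, 0), (0, 0)); rewrite chiE /= E1p E0q eZ0 mulr1.
  exact: eZ_neq1.
have [b0|b0] := eqVneq b 0; last first.
  exists ((0, 1), (0, 0)); rewrite chiE /= E2p E0q eZ0 mulr1.
  exact: eZ_neq1.
have [c0|c0] := eqVneq c 0; last first.
  exists ((0, 0), (1, 0)); rewrite chiE /= E0p E1q eZ0 mul1r.
  exact: eZ_neq1.
have [d0|d0] := eqVneq d 0; last first.
  exists ((0, 0), (0, 1)); rewrite chiE /= E0p E2q eZ0 mul1r.
  exact: eZ_neq1.
by move: s0; rewrite a0 b0 c0 d0 eqxx.
Qed.

Lemma sum_char (R : realType) p q (H : {set Gpq p q}) (f : Gpq p q -> R[i]) (h0 : Gpq p q) :
  (forall x y, f (x + y) = f x * f y) -> is_subgroup H -> h0 \in H -> f h0 != 1 ->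
  \sum_(h in H) f h = 0.
Proof.
move=> fD [H0 HB] h0H fh0.
have HD x y : x \in H -> y \in H -> x + y \in H.
  move=> xH yH; have := HB x (0 - y) xH (HB _ _ H0 yH).
  by rewrite sub0r opprK.
have eS : \sum_(h in H) f h = (\sum_(h in H) f h) * f h0.
  rewrite [LHS](reindex_inj (addIr h0)) /= big_distrl /=.
  apply: eq_big => [j|j _]; last by rewrite fD.
  apply/idP/idP => [jH|]; first by have := HB _ _ jH h0H; rewrite addrK.
  by move=> jH; apply: HD.
apply/eqP; move: eS => /eqP; rewrite -subr_eq0 -{1}[\sum_(h in H) f h]mulr1 -mulrBr.
by rewrite mulf_eq0 subr_eq0 [1 == _]eq_sym (negbTE fh0) orbF.
Qed.

Lemma setT_subgroup p q : is_subgroup [set: Gpq p q].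
Proof. by split=> *; rewrite inE. Qed.

Theorem corollary5p2 (R : realType) (p q : nat) :
  prime p -> prime q -> p != q ->
  forall (A B : {set Gpq p q}),
    is_subgroup B -> direct_sum_eq_G A B -> spectral R A.
Proof.
move=> pp qp _ A B HB [Hcov Hcard].
have p1 : (1 < p)%N by apply: prime_gt1.
have q1 : (1 < q)%N by apply: prime_gt1.
have B0 : 0 \in B by case: HB.
have Bpos : (0 < #|B|)%N by apply/card_gt0P; exists 0.
pose Lam := [set w : Gpq p q | [forall b, (b \in B) ==> (chi R w b == 1)]].
have LamP w : reflect (forall b, b \in B -> chi R w b = 1) (w \in Lam).
  rewrite inE; apply: (iffP forallP) => [h b bB|h b].
    by have /implyP/(_ bB)/eqP := h b.
  by apply/implyP => bB; rewrite h.
have inner w : \sum_(b in B) chi R w b = if w \in Lam then (#|B|%:R) else 0.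
  case: (LamP w) => [h|h].
    by rewrite (eq_bigr (fun=> 1)) // sumr_const.
  case: (boolP [exists b, (b \in B) && (chi R w b != 1)]) =>
      [/existsP[b0 /andP[b0B hb0]]|/existsPn hn]; last first.
    exfalso; apply: h => b bB; have := hn b; rewrite bB /= negbK.
    by move/eqP.
  by apply: (@sum_char R p q B (chi R w) b0) => // x y; apply: chiDr.
have outer b : \sum_(w : Gpq p q) chi R w b = if b == 0 then #|[set: Gpq p q]|%:R else 0.
  case: eqP => [->|/eqP b0].
    rewrite (eq_bigr (fun=> 1)) ?sumr_const ?cardsT // => w _; exact: chi0r.
  have [w0 hw0] := @chi_nondeg R p q b p1 q1 b0.
  rewrite (eq_bigl (fun w => w \in [set: Gpq p q])); last by move=> w; rewrite inE.
  under eq_bigr do rewrite chi_sym.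
  apply: (@sum_char R p q [set: Gpq p q] (chi R b) w0).
  - by move=> x y; apply: chiDr.
  - exact: setT_subgroup.
  - by rewrite inE.
  - by rewrite chi_sym.
have cardLam : #|Lam| = #|A|.
  have e1 : \sum_(w : Gpq p q) \sum_(b in B) chi R w b = (#|B| * #|Lam|)%:R.
    under eq_bigr do rewrite inner.
    by rewrite -big_mkcond /= sumr_const natrM mulr_natr.
  have e2 : \sum_(w : Gpq p q) \sum_(b in B) chi R w b = #|[set: Gpq p q]|%:R.
    rewrite exchange_big /=.
    under eq_bigr do rewrite outer.
    by rewrite (bigD1 (0 : Gpq p q) B0) /= big1 ?addr0 // => i /andP[_ /negbTE ->].
  move: e2; rewrite e1 -Hcard => /eqP; rewrite eqr_nat mulnC => /eqP.
  by move/eqP; rewrite eqn_pmul2r // => /eqP.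
exists Lam; split => // l l' lL l'L ll'.
set d := l - l'.
have dL : d \in Lam.
  apply/LamP => b bB; rewrite chi_sym /d chiDr //.
  have e : chi R b l' * chi R b (- l') = 1 by rewrite -chiDr // subrr chi0r.
  move: e; rewrite chi_sym (LamP l' l'L b bB) mul1r => ->.
  by rewrite chi_sym (LamP l lL b bB) mulr1.
have d0 : d != 0 by rewrite /d subr_eq0.
have [w0 hw0] := @chi_nondeg R p q d p1 q1 d0.
have S0 : \sum_(g in [set: Gpq p q]) chi R d g = 0.
  apply: (@sum_char R p q [set: Gpq p q] (chi R d) w0).
  - by move=> x y; apply: chiDr.
  - exact: setT_subgroup.
  - by rewrite inE.
  - by rewrite chi_sym.
pose h := fun x : Gpq p q * Gpq p q => x.1 + x.2.
have himT : h @: setX A B = [set: Gpq p q].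
  apply/setP => g; rewrite inE; have [a [b [aA bB ->]]] := Hcov g.
  by apply/imsetP; exists (a, b); rewrite // in_setX aA bB.
have hinj : {in setX A B &, injective h}.
  apply/imset_injP; rewrite himT cardsX Hcard.
  by [].
move: S0; rewrite -himT big_imset //=.
rewrite (eq_bigl (fun x => (x.1 \in A) && (x.2 \in B))); last by move=> [a b]; rewrite in_setX.
rewrite -(pair_big (fun a => a \in A) (fun b => b \in B) (fun a b => chi R d (h (a, b)))) /=.
under eq_bigr => a aA do under eq_bigr => b bB do rewrite /h /= chiDr // (LamP d dL b bB) mulr1.
under eq_bigr do rewrite sumr_const.
under eq_bigr do rewrite -mulr_natr.
rewrite -big_distrl /= => /eqP; rewrite mulf_eq0 pnatr_eq0 eqn0Ngt Bpos orbF.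
by move/eqP.
Qed.
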